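(* $\mathfrak{L}(\mathbf{F}_2)^w_{O(n)} \subsetneq \mathfrak{L}(\mathbf{F}_2\times\mathbf{F}_2)^w_{O(n)}$.
   Context: For a group $G$ with identity $e$, a $G$-automaton is a tuple $(Q,\Sigma,G,\delta,q_0,Q_a)$ where $Q$ is a finite set of states, $\Sigma$ a finite input alphabet, $q_0\in Q$ the initial state, $Q_a\subseteq Q$ the accepting states, and $\delta$ assigns to each $(q,\sigma)\in Q\times(\Sigma\cup\{\varepsilon\})$ a finite set of pairs $(q',m)\in Q\times G$. The register holds an element of $G$, initially $e$; using a transition $(q',m)\in\delta(q,\sigma)$ (one step) the automaton reads $\sigma$ (or nothing), moves to $q'$ and replaces the register content $x$ by $xm$. A word is accepted if some computation reads it entirely and ends in an accepting state with register equal to $e$. A $G$-automaton recognizing $\mathtt{L}$ is weakly $t(n)$ time-bounded if every $x\in\mathtt{L}$ with $|x|=n$ has an accepting computation of at most $t(n)$ steps; $\mathfrak{L}(G)^w_{O(n)}$ is the class of languages recognized by weakly $t(n)$ time-bounded $G$-automata for some $t(n)=O(n)$. $\mathbf{F}_2$ is the free group of rank 2. *)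

(* Defs.v *)
From mathcomp Require Import all_boot.
Set Implicit Arguments. Unset Strict Implicit. Unset Printing Implicit Defensive.

Record group := Group {
  gcar :> eqType;
  gmul : gcar -> gcar -> gcar;
  gone : gcar;
  ginv : gcar -> gcar }.

(* A letter (g, s) is generator g (false = a, true = b), inverted iff s.*)
Definition letter := (bool * bool)%type.
Definition linv (x : letter) : letter := (x.1, ~~ x.2).
Definition adj (x y : letter) : bool := y != linv x.
Definition reduced (w : seq letter) : bool := sorted adj w.

Definition ccons (l : letter) (w : seq letter) : seq letter :=
  match w with
  | [::] => [:: l]
  | y :: w' => if y == linv l then w' else l :: w
  end.

Lemma reduced_ccons l w : reduced w -> reduced (ccons l w).
Proof.
case: w => [|y w] //= Hw.
case: eqP => [_|/eqP Hy]; first by case: w Hw => //= z w /andP [].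
by rewrite /reduced /= /adj Hy.
Qed.

Definition F2 : Type := {w : seq letter | reduced w}.

Lemma reduced_foldr (u v : seq letter) : reduced v -> reduced (foldr ccons v u).
Proof. by move=> Hv; elim: u => //= l u IH; apply: reduced_ccons. Qed.

Definition F2mul (u v : F2) : F2 :=
  exist _ (foldr ccons (sval v) (sval u)) (reduced_foldr (sval u) (svalP v)).

Definition F2one : F2 := exist _ [::] (erefl true).

Lemma reduced_inv (u : seq letter) : reduced u -> reduced (rev (map linv u)).
Proof.
rewrite /reduced rev_sorted.
case: u => //= x u; elim: u x => //= y u IH x /andP [Hxy Hu].
rewrite IH // andbT /adj.
apply: contra Hxy; case: x => x1 x2; case: y Hu => y1 y2 _.
by rewrite /linv /= => /eqP [-> ->]; rewrite negbK.
Qed.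

Definition F2inv (u : F2) : F2 :=
  exist _ (rev (map linv (sval u))) (reduced_inv (svalP u)).

Definition F2_group : group := @Group F2 F2mul F2one F2inv.

Definition prod_group (G H : group) : group :=
  @Group (gcar G * gcar H)%type
    (fun x y => (gmul x.1 y.1, gmul x.2 y.2))
    (gone G, gone H)
    (fun x => (ginv x.1, ginv x.2)).

Record Gautomaton (G : group) (Sigma : finType) := GAut {
  state : finType;
  delta : state -> option Sigma -> seq (state * G);  (* None = epsilon *)
  q0 : state;
  accepting : pred state }.
Arguments state {G Sigma} g.
Arguments delta {G Sigma} g.
Arguments q0 {G Sigma} g.
Arguments accepting {G Sigma} g.

(* comp A q x w k q' x' : starting in state q with register x, the
   automaton can read exactly w in exactly k steps and end in state q'
   with register x'. *)
Inductive comp (G : group) (Sigma : finType) (A : Gautomaton G Sigma) :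
  state A -> G -> seq Sigma -> nat -> state A -> G -> Prop :=
| comp_nil q x : comp q x [::] 0 q x
| comp_read q x s w k q' m q'' x'' :
    (q', m) \in delta A q (Some s) ->
    comp q' (gmul x m) w k q'' x'' -> comp q x (s :: w) k.+1 q'' x''
| comp_eps q x w k q' m q'' x'' :
    (q', m) \in delta A q None ->
    comp q' (gmul x m) w k q'' x'' -> comp q x w k.+1 q'' x''.
Arguments comp {G Sigma} A.

Definition accepts_in (G : group) (Sigma : finType) (A : Gautomaton G Sigma)
  (w : seq Sigma) (k : nat) : Prop :=
  exists q, accepting A q /\ comp A (q0 A) (gone G) w k q (gone G).

Definition accepts (G : group) (Sigma : finType) (A : Gautomaton G Sigma)
  (w : seq Sigma) : Prop := exists k, accepts_in A w k.

Definition language (Sigma : Type) := seq Sigma -> Prop.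

Definition recognizes (G : group) (Sigma : finType) (A : Gautomaton G Sigma)
  (L : language Sigma) : Prop := forall w, L w <-> accepts A w.

Definition weakly_time_bounded (G : group) (Sigma : finType)
  (A : Gautomaton G Sigma) (L : language Sigma) (t : nat -> nat) : Prop :=
  forall w, L w -> exists k, k <= t (size w) /\ accepts_in A w k.

Definition bigO_n (t : nat -> nat) : Prop :=
  exists c n0, forall n, n0 <= n -> t n <= c * n.

Definition in_wlin_class (G : group) (Sigma : finType) (L : language Sigma) : Prop :=
  exists (A : Gautomaton G Sigma) (t : nat -> nat),
    bigO_n t /\ recognizes A L /\ weakly_time_bounded A L t.

(* Main.v *)
Require Import Defs.
From mathcomp Require Import all_boot zify.
From Stdlib Require Import ClassicalEpsilon.
Import Defs.
Set Implicit Arguments. Unset Strict Implicit. Unset Printing Implicit Defensive.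

Lemma F2eq (u v : F2) : sval u = sval v -> u = v.
Proof. case: u => u hu; case: v => v hv /= E; subst v. by rewrite (bool_irrelevance hu hv). Qed.

Lemma linvK l : linv (linv l) = l.
Proof. by case: l => a b; rewrite /linv /= negbK. Qed.

Lemma red_tail l w : reduced (l :: w) -> reduced w.
Proof. exact: path_sorted. Qed.

Lemma red_catl u v : reduced (u ++ v) -> reduced u.
Proof. case: u => //= l u; rewrite /reduced /= cat_path; by case/andP. Qed.

Lemma red_catr u v : reduced (u ++ v) -> reduced v.
Proof. elim: u => //= l u IH H; apply: IH; exact: red_tail H. Qed.

Lemma cc1 l z : reduced z -> ccons l (ccons (linv l) z) = z.
Proof.
case: z => [|y z] /=; first by rewrite eqxx.
rewrite linvK; case: eqP => [->|Hy] Hr /=; last by rewrite eqxx.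
case: z Hr => [|y2 z2] //= /andP [Hadj _]. by rewrite /adj in Hadj; rewrite (negbTE Hadj).
Qed.

Lemma cc2 l v w : reduced w -> foldr ccons w (ccons l v) = ccons l (foldr ccons w v).
Proof.
case: v => [|y v] Hw //=.
case: eqP => [->|_] //=. by rewrite cc1 // reduced_foldr.
Qed.

Lemma F2assoc (u v w : F2) : F2mul (F2mul u v) w = F2mul u (F2mul v w).
Proof.
apply: F2eq; case: u v w => u _ [v _] [w Hw] /=.
elim: u => //= l u IH. by rewrite cc2 // IH.
Qed.

Lemma F2invl (u : F2) : F2mul (F2inv u) u = F2one.
Proof.
apply: F2eq; case: u => u _ /=.
elim: u => //= l u IH. by rewrite rev_cons -cats1 foldr_cat /= linvK eqxx.
Qed.

Lemma F2onel (u : F2) : F2mul F2one u = u.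
Proof. by apply: F2eq. Qed.

Lemma catred u v : reduced (u ++ v) -> foldr ccons v u = u ++ v.
Proof.
elim: u => //= l u IH H. rewrite IH; last exact: red_tail H.
move: H; case: (u ++ v) => //= y s /andP [Hadj _]. by rewrite (negbTE Hadj).
Qed.

Lemma F2oner (u : F2) : F2mul u F2one = u.
Proof. apply: F2eq; case: u => u Hu /=. by rewrite catred cats0. Qed.

Section Comp.
Variables (Sigma : finType) (A : Gautomaton F2_group Sigma).

Lemma comp_trans q x w k q' y (g : F2) :
  comp A q x w k q' y -> comp A q (F2mul g x) w k q' (F2mul g y).
Proof.
elim => {q x w k q' y} [q x|q x s w k q1 m q2 x2 Hm _ IH|q x w k q1 m q2 x2 Hm _ IH].
- exact: comp_nil.
- apply: comp_read Hm _. by rewrite /= F2assoc.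
- apply: comp_eps Hm _. by rewrite /= F2assoc.
Qed.

Lemma comp_cancel q x w k q' y (g : F2) :
  comp A q (F2mul g x) w k q' (F2mul g y) -> comp A q x w k q' y.
Proof.
move/(comp_trans (F2inv g)). by rewrite -!F2assoc F2invl !F2onel.
Qed.

End Comp.
Section CompG.
Variables (G : group) (Sigma : finType) (A : Gautomaton G Sigma).
Lemma comp_cat q x u k1 q1 x1 v k2 q2 x2 :
  comp A q x u k1 q1 x1 -> comp A q1 x1 v k2 q2 x2 -> comp A q x (u ++ v) (k1 + k2) q2 x2.
Proof.
elim => {q x u k1 q1 x1} [q x|q x s w k q1 m q3 x3 Hm _ IH|q x w k q1 m q3 x3 Hm _ IH] H //.
- exact: comp_read Hm (IH H).
- exact: comp_eps Hm (IH H).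
Qed.

Lemma comp_split q x w k q2 x2 : comp A q x w k q2 x2 ->
  forall u v, w = u ++ v -> exists k1 k2 q1 x1, comp A q x u k1 q1 x1 /\ comp A q1 x1 v k2 q2 x2.
Proof.
elim => {q x w k q2 x2} [q x|q x s w k q1 m q3 x3 Hm H IH|q x w k q1 m q3 x3 Hm H IH] u v E.
- case: u E => // ; case: v => // _. exists 0, 0, q, x; split; exact: comp_nil.
- case: u E => [|s' u] /= E.
  + subst v. exists 0, k.+1, q, x; split; [exact: comp_nil | exact: comp_read Hm H].
  + case: E => <- E. have [k1 [k2 [q4 [x4 [H1 H2]]]]] := IH _ _ E.
    exists k1.+1, k2, q4, x4; split => //; exact: comp_read Hm H1.
- have [k1 [k2 [q4 [x4 [H1 H2]]]]] := IH _ _ E.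
  exists k1.+1, k2, q4, x4; split => //; exact: comp_eps Hm H1.
Qed.
End CompG.

Definition inv (c : seq letter) := rev (map linv c).

Lemma decomp (x m : seq letter) : reduced x ->
  exists x' c m', [/\ x = x' ++ c, m = inv c ++ m' & foldr ccons m x = x' ++ m'].
Proof.
elim: x => [|l x IH] Hx; first by exists [::], [::], m.
have [x' [c [m' [E1 E2 E3]]]] := IH (red_tail Hx).
rewrite /= E3.
case: x' E1 E3 => [|y x'] E1 E3.
- case: m' E2 E3 => [|y m'] E2 E3.
  + exists [:: l], c, [::]. by rewrite E1 E2.
  + rewrite /=. case: eqP => [Hy|Hy].
    * exists [::], (l :: c), m'; split => //; first by rewrite E1.
      by rewrite E2 /inv /= rev_cons cat_rcons Hy.
    * exists [:: l], c, (y :: m'). by rewrite E1.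
- move: Hx; rewrite E1 /= => /andP [Hadj _].
  rewrite /adj in Hadj. rewrite (negbTE Hadj).
  by exists (l :: y :: x'), c, m'.
Qed.

Definition pre (R x : seq letter) := take (size R) x == R.

Lemma take_catl (n : nat) (s1 s2 : seq letter) : n <= size s1 -> take n (s1 ++ s2) = take n s1.
Proof.
rewrite take_cat; case: ltnP => // H1 H2.
have -> : n = size s1 by apply/eqP; rewrite eqn_leq H1 H2.
by rewrite subnn take0 cats0 take_size.
Qed.

Lemma pre_size R x : pre R x -> size R <= size x.
Proof.
rewrite /pre => /eqP E. have H := size_take (size R) x. rewrite E in H.
move: H; case: ltnP => // H1 H2; [exact: ltnW | by rewrite -H2].
Qed.

Lemma pre_eq R x : pre R x -> x = R ++ drop (size R) x.
Proof. rewrite /pre => /eqP {1}<-. by rewrite cat_take_drop. Qed.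

Lemma pre_catl R s1 s2 : size R <= size s1 -> pre R (s1 ++ s2) = pre R s1.
Proof. by move=> H; rewrite /pre take_catl. Qed.

Lemma step_crossF (R x m : seq letter) : reduced x -> ~~ pre R x ->
  pre R (foldr ccons m x) -> size (drop (size R) (foldr ccons m x)) < size m.
Proof.
move=> Hx; have [x' [c [m' [E1 E2 E3]]]] := decomp m Hx.
rewrite E3 E1 => H1 H2.
case: (leqP (size R) (size x')) => H.
  by move: H1; rewrite pre_catl // -(pre_catl m') // H2.
have := pre_size H2. rewrite E2 size_drop !size_cat /inv size_rev size_map. lia.
Qed.

Lemma step_crossB (R x m : seq letter) : reduced x -> pre R x ->
  ~~ pre R (foldr ccons m x) -> size (drop (size R) x) < size m.
Proof.
move=> Hx; have [x' [c [m' [E1 E2 E3]]]] := decomp m Hx.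
rewrite E3 E1 => H1 H2.
case: (leqP (size R) (size x')) => H.
  by move: H2; rewrite pre_catl // -(pre_catl c) // H1.
have := pre_size H1. rewrite E2 size_drop !size_cat /inv size_rev size_map. lia.
Qed.

Section Cross.
Variables (Sigma : finType) (A : Gautomaton F2_group Sigma).

Definition Mb : nat :=
  \max_(q : state A) \max_(o : option Sigma) \max_(t <- delta A q o) size (sval (t.2 : F2)).

Lemma Mb_ge q o q1 (m : F2) : (q1, m) \in delta A q o -> size (sval m) <= Mb.
Proof.
move=> H. apply: leq_trans (leq_bigmax q).
apply: leq_trans (leq_bigmax o).
exact: (@leq_bigmax_seq _ _ xpredT (fun t : state A * F2 => size (sval t.2)) _ H).
Qed.

Lemma crossF R q y w k q' z :
  comp A q y w k q' z -> ~~ pre R (sval y) -> pre R (sval z) ->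
  exists w1 w2 k1 k2 p x, [/\ w = w1 ++ w2, comp A q y w1 k1 p x, comp A p x w2 k2 q' z,
      pre R (sval x) & size (drop (size R) (sval x)) < Mb].
Proof.
elim => {q y w k q' z} [q x|q x s w k q1 m q3 x3 Hm H IH|q x w k q1 m q3 x3 Hm H IH] H1 H2.
- by rewrite H2 in H1.
- case Hp: (pre R (sval (F2mul x m))).
  + exists [:: s], w, 1, k, q1, (F2mul x m); split => //.
    * exact: (comp_read Hm (comp_nil _ _)).
    * apply: (leq_trans _ (Mb_ge Hm)). exact: (step_crossF (svalP x) H1 Hp).
  + have [w1 [w2 [k1 [k2 [p [x' [E C1 C2 P1 P2]]]]]]] := IH (negbT Hp) H2.
    exists (s :: w1), w2, k1.+1, k2, p, x'; split => //; first by rewrite E.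
    exact: comp_read Hm C1.
- case Hp: (pre R (sval (F2mul x m))).
  + exists [::], w, 1, k, q1, (F2mul x m); split => //.
    * exact: (comp_eps Hm (comp_nil _ _)).
    * apply: (leq_trans _ (Mb_ge Hm)). exact: (step_crossF (svalP x) H1 Hp).
  + have [w1 [w2 [k1 [k2 [p [x' [E C1 C2 P1 P2]]]]]]] := IH (negbT Hp) H2.
    exists w1, w2, k1.+1, k2, p, x'; split => //.
    exact: comp_eps Hm C1.
Qed.

Lemma crossB R q y w k q' z :
  comp A q y w k q' z -> pre R (sval y) -> ~~ pre R (sval z) ->
  exists w1 w2 k1 k2 p x, [/\ w = w1 ++ w2, comp A q y w1 k1 p x, comp A p x w2 k2 q' z,
      pre R (sval x) & size (drop (size R) (sval x)) < Mb].
Proof.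
elim => {q y w k q' z} [q x|q x s w k q1 m q3 x3 Hm H IH|q x w k q1 m q3 x3 Hm H IH] H1 H2.
- by rewrite H1 in H2.
- case Hp: (pre R (sval (F2mul x m))).
  + have [w1 [w2 [k1 [k2 [p [x' [E C1 C2 P1 P2]]]]]]] := IH Hp H2.
    exists (s :: w1), w2, k1.+1, k2, p, x'; split => //; first by rewrite E.
    exact: comp_read Hm C1.
  + exists [::], (s :: w), 0, k.+1, q, x; split => //.
    * exact: comp_nil.
    * exact: comp_read Hm H.
    * apply: (leq_trans _ (Mb_ge Hm)). exact: (step_crossB (svalP x) H1 (negbT Hp)).
- case Hp: (pre R (sval (F2mul x m))).
  + have [w1 [w2 [k1 [k2 [p [x' [E C1 C2 P1 P2]]]]]]] := IH Hp H2.
    exists w1, w2, k1.+1, k2, p, x'; split => //.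
    exact: comp_eps Hm C1.
  + exists [::], w, 0, k.+1, q, x; split => //.
    * exact: comp_nil.
    * exact: comp_eps Hm H.
    * apply: (leq_trans _ (Mb_ge Hm)). exact: (step_crossB (svalP x) H1 (negbT Hp)).
Qed.
End Cross.

Fixpoint lcp (u v : seq letter) : seq letter :=
  match u, v with
  | a :: u', b :: v' => if a == b then a :: lcp u' v' else [::]
  | _, _ => [::]
  end.

Lemma pre_cons a R b x : pre (a :: R) (b :: x) = (b == a) && pre R x.
Proof. by rewrite /pre /= eqseq_cons. Qed.

Lemma pre_nil x : pre [::] x.
Proof. by rewrite /pre take0. Qed.

Lemma lcp_pre1 u v : pre (lcp u v) u.
Proof.
elim: u v => [|a u IH] [|b v] //=; rewrite ?pre_nil //.
case: eqP => [->|_]; by rewrite ?pre_cons ?eqxx ?IH ?pre_nil.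
Qed.

Lemma lcp_pre2 u v : pre (lcp u v) v.
Proof.
elim: u v => [|a u IH] [|b v] //=; rewrite ?pre_nil //.
case: eqP => [->|_]; by rewrite ?pre_cons ?eqxx ?IH ?pre_nil.
Qed.

Lemma lcp_branch u v : size (lcp u v) < size u ->
  exists a, pre (lcp u v ++ [:: a]) u && ~~ pre (lcp u v ++ [:: a]) v.
Proof.
elim: u v => [|a u IH] [|b v] //=.
- move=> _; exists a. by rewrite pre_cons eqxx pre_nil.
- case: eqP => [<-|Hab] /=.
  + move=> Hs. have [c Hc] := IH v Hs. exists c. by rewrite !pre_cons eqxx.
  + move=> _; exists a. rewrite !pre_cons eqxx pre_nil /=.
    by apply/negP => /andP [/eqP E _]; apply: Hab.
Qed.

Lemma pre_self R t : pre R (R ++ t).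
Proof. by rewrite /pre take_size_cat. Qed.

Lemma pre_catR R s y : pre (R ++ s) y -> pre R y.
Proof. move/pre_eq => ->. rewrite -catA. exact: pre_self. Qed.

Lemma split_pre (P x : F2) : pre (sval P) (sval x) ->
  exists E : F2, x = F2mul P E /\ sval E = drop (size (sval P)) (sval x).
Proof.
move=> H. have Hx := svalP x. rewrite (pre_eq H) in Hx.
have He := red_catr Hx.
exists (exist (fun w => reduced w) _ He); split => //. apply: F2eq => /=.
by rewrite catred // -pre_eq.
Qed.

Section Dec.
Variables (Sigma : finType) (A : Gautomaton F2_group Sigma).

Lemma dec q0 U V Z k qf : comp A q0 F2one (U ++ V ++ Z) k qf F2one ->
 exists (P E1 E2 E3 : F2) v0 a1 b1 b2 c1 v3 p1 p2 p3,
  U = v0 ++ a1 /\ V = b1 ++ b2 /\ Z = c1 ++ v3 /\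
  (exists k, comp A q0 F2one v0 k p1 (F2mul P E1)) /\
  (exists k, comp A p1 E1 (a1 ++ b1) k p2 E2) /\
  (exists k, comp A p2 E2 (b2 ++ c1) k p3 E3) /\
  (exists k, comp A p3 (F2mul P E3) v3 k qf F2one) /\
  size (sval E1) <= Mb A /\ size (sval E2) <= Mb A /\ size (sval E3) <= Mb A.
Proof.
move=> H. have [k1 [k23 [r1 [x1 [HA HBC]]]]] := comp_split H (erefl).
have [k2 [k3 [r2 [x2 [HB HC]]]]] := comp_split HBC erefl.
have HP1 := lcp_pre1 (sval x1) (sval x2).
have HP2 := lcp_pre2 (sval x1) (sval x2).
move: HP1 HP2; set Pw := lcp _ _ => HP1 HP2.
have HPr : reduced Pw. have := svalP x1; rewrite (pre_eq HP1); exact: red_catl.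
pose P : F2 := exist _ Pw HPr.
have SA : exists v0 a1 p1 y1 ka kb, U = v0 ++ a1 /\ comp A q0 F2one v0 ka p1 y1 /\
    comp A p1 y1 a1 kb r1 x1 /\ pre Pw (sval y1) /\ size (drop (size Pw) (sval y1)) <= Mb A.
  case Hp0: (pre Pw (sval F2one)).
  - exists [::], U, q0, F2one, 0, k1; split => //; split; first exact: comp_nil.
    by split => //; split => //; rewrite drop_oversize.
  - have [w1 [w2 [ka [kb [p [y [E C1 C2 P1 P2]]]]]]] := crossF HA (negbT Hp0) HP1.
    exists w1, w2, p, y, ka, kb; do 4 (split => //). exact: ltnW.
have SC : exists c1 v3 p3 y3 ka kb, Z = c1 ++ v3 /\ comp A r2 x2 c1 ka p3 y3 /\
    comp A p3 y3 v3 kb qf F2one /\ pre Pw (sval y3) /\ size (drop (size Pw) (sval y3)) <= Mb A.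
  case Hp0: (pre Pw (sval F2one)).
  - exists Z, [::], qf, F2one, k3, 0; split; first by rewrite cats0.
    split => //; split; first exact: comp_nil.
    by split => //; rewrite drop_oversize.
  - have [w1 [w2 [ka [kb [p [y [E C1 C2 P1 P2]]]]]]] := crossB HC HP2 (negbT Hp0).
    exists w1, w2, p, y, ka, kb; do 4 (split => //). exact: ltnW.
have SB : exists b1 b2 p2 y2 ka kb, V = b1 ++ b2 /\ comp A r1 x1 b1 ka p2 y2 /\
    comp A p2 y2 b2 kb r2 x2 /\ pre Pw (sval y2) /\ size (drop (size Pw) (sval y2)) <= Mb A.
  case: (ltnP (size Pw) (size (sval x1))) => Hs.
  - have [a /andP [Ha1 Ha2]] := lcp_branch Hs.
    have [w1 [w2 [ka [kb [p [y [E C1 C2 P1 P2]]]]]]] := crossB HB Ha1 Ha2.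
    exists w1, w2, p, y, ka, kb; do 3 (split => //). split; first exact: pre_catR P1.
    have := pre_size P1. move: P2. rewrite /Pw !size_drop size_cat /=. lia.
  - exists [::], V, r1, x1, 0, k2; split => //; split; first exact: comp_nil.
    split => //; split => //. by rewrite drop_oversize.
have [v0 [a1 [p1 [y1 [ka1 [kb1 [EU [CA1 [CA2 [PA SzA]]]]]]]]]] := SA.
have [b1 [b2 [p2 [y2 [ka2 [kb2 [EV [CB1 [CB2 [PB SzB]]]]]]]]]] := SB.
have [c1 [v3 [p3 [y3 [ka3 [kb3 [EZ [CC1 [CC2 [PC SzC]]]]]]]]]] := SC.
have [E1 [HE1 SE1]] := split_pre (P:=P) PA.
have [E2 [HE2 SE2]] := split_pre (P:=P) PB.
have [E3 [HE3 SE3]] := split_pre (P:=P) PC.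
exists P, E1, E2, E3, v0, a1, b1, b2, c1, v3, p1, p2, p3.
do 3 (split => //).
split; first by exists ka1; rewrite -HE1.
split. exists (kb1 + ka2). apply: (@comp_cancel _ _ _ _ _ _ _ _ P). rewrite -HE1 -HE2.
  exact: comp_cat CA2 CB1.
split. exists (kb2 + ka3). apply: (@comp_cancel _ _ _ _ _ _ _ _ P). rewrite -HE2 -HE3.
  exact: comp_cat CB2 CC1.
split; first by exists kb3; rewrite -HE3.
by rewrite SE1 SE2 SE3.
Qed.
End Dec.

Definition o0 : 'I_3 := @Ordinal 3 0 isT.
Definition o1 : 'I_3 := @Ordinal 3 1 isT.
Definition o2 : 'I_3 := @Ordinal 3 2 isT.
Definition Wd n : seq 'I_3 := nseq n o0 ++ nseq n o1 ++ nseq n o2.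
Definition L3 : language 'I_3 := fun w => exists n, w = Wd n.

Notation cnt s w := (count (pred1 s) w).

Lemma cnt_W0 n : cnt o0 (Wd n) = n.
Proof. by rewrite /Wd !count_cat !count_nseq /= mul1n !mul0n !addn0. Qed.
Lemma cnt_W1 n : cnt o1 (Wd n) = n.
Proof. by rewrite /Wd !count_cat !count_nseq /= mul1n !mul0n addn0. Qed.
Lemma cnt_W2 n : cnt o2 (Wd n) = n.
Proof. by rewrite /Wd !count_cat !count_nseq /= mul1n !mul0n. Qed.

Lemma cnt_split (x y : seq 'I_3) n s t : x ++ y = nseq n s -> cnt t x + cnt t y = (s == t) * n.
Proof. by move=> E; rewrite -count_cat E count_nseq. Qed.

Definition letters : seq letter := [:: (false,false); (false,true); (true,false); (true,true)].
Fixpoint wordsUpTo (M : nat) : seq (seq letter) :=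
  if M is M'.+1 then [::] :: [seq l :: w | l <- letters, w <- wordsUpTo M'] else [:: [::]].
Lemma wordsUpTo_mem M e : size e <= M -> e \in wordsUpTo M.
Proof.
elim: M e => [|M IH] [|l e] //= H.
have He := IH e H.
rewrite in_cons !mem_cat; case: l => [[] []]; by rewrite (map_f _ He) ?orbT.
Qed.

Section Main.
Variable A : Gautomaton F2_group 'I_3.

Definition sgT := ((state A * seq letter) * ((state A * seq letter) * (state A * seq letter)))%type.

Definition S1 : seq (state A * seq letter) :=
  [seq (p, e) | p <- enum (state A), e <- wordsUpTo (Mb A)].
Definition S3 : seq sgT := [seq (a, bc) | a <- S1, bc <- [seq (b, c) | b <- S1, c <- S1]].

Definition good n (sg : sgT) : Prop :=
  exists (P E1 E2 E3 : F2) v0 u1 u2 v3 qf,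
   [/\ sval E1 = sg.1.2, sval E2 = sg.2.1.2 & sval E3 = sg.2.2.2] /\
   accepting A qf /\
   (exists k, comp A (q0 A) F2one v0 k sg.1.1 (F2mul P E1)) /\
   (exists k, comp A sg.1.1 E1 u1 k sg.2.1.1 E2) /\
   (exists k, comp A sg.2.1.1 E2 u2 k sg.2.2.1 E3) /\
   (exists k, comp A sg.2.2.1 (F2mul P E3) v3 k qf F2one) /\
   (cnt o0 v0 + cnt o0 u1 = n /\ cnt o1 u1 + cnt o1 u2 = n /\ cnt o2 u2 + cnt o2 v3 = n /\
   cnt o1 v0 = 0 /\ cnt o2 v0 = 0 /\ cnt o2 u1 = 0 /\ cnt o0 u2 = 0 /\ cnt o0 v3 = 0 /\ cnt o1 v3 = 0).

Lemma S1_mem p (E : F2) : size (sval E) <= Mb A -> (p, sval E) \in S1.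
Proof. move=> H; apply: allpairs_f; [exact: mem_enum | exact: wordsUpTo_mem]. Qed.

Lemma good_ex : recognizes A L3 -> forall n, exists sg, sg \in S3 /\ good n sg.
Proof.
move=> Hrec n.
have [k [qf [Hacc Hc]]] : accepts A (Wd n) by apply/Hrec; exists n.
have := dec Hc.
move=> [P [E1 [E2 [E3 [v0 [a1 [b1 [b2 [c1 [v3 [p1 [p2 [p3
  [EU [EV [EZ [Ca [Cb [Cc [Cd [Sz1 [Sz2 Sz3]]]]]]]]]]]]]]]]]]]]]].
exists ((p1, sval E1), ((p2, sval E2), (p3, sval E3))); split.
  apply: allpairs_f; first exact: S1_mem.
  apply: allpairs_f; exact: S1_mem.
exists P, E1, E2, E3, v0, (a1 ++ b1), (b2 ++ c1), v3, qf; do 6 (split => //).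
have := cnt_split o0 (esym EU); have := cnt_split o1 (esym EU); have := cnt_split o2 (esym EU).
have := cnt_split o0 (esym EV); have := cnt_split o1 (esym EV); have := cnt_split o2 (esym EV).
have := cnt_split o0 (esym EZ); have := cnt_split o1 (esym EZ); have := cnt_split o2 (esym EZ).
rewrite !count_cat /=. lia.
Qed.

Lemma swap n n' sg : recognizes A L3 -> good n sg -> good n' sg -> n = n'.
Proof.
move=> Hrec [P [E1 [E2 [E3 [v0 [u1 [u2 [v3 [qf [[S1 S2 S3] [Hacc [[ka Ca] [[kb Cb] [[kc Cc] [[kd Cd] Cn]]]]]]]]]]]]]]].
move=> [P' [E1' [E2' [E3' [v0' [u1' [u2' [v3' [qf' [[S1' S2' S3'] [_ [_ [[kb' Cb'] [[kc' Cc'] [_ Cn']]]]]]]]]]]]]]].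
have e1 : E1' = E1 by apply: F2eq; rewrite S1 S1'.
have e2 : E2' = E2 by apply: F2eq; rewrite S2 S2'.
have e3 : E3' = E3 by apply: F2eq; rewrite S3 S3'.
subst E1' E2' E3'.
have Hw1 : L3 (v0 ++ u1' ++ u2 ++ v3).
  apply/Hrec. exists (ka + (kb' + (kc + kd))). exists qf; split => //.
  apply: comp_cat Ca _. apply: comp_cat (comp_trans P Cb') _. exact: comp_cat (comp_trans P Cc) Cd.
have Hw2 : L3 (v0 ++ u1 ++ u2' ++ v3).
  apply/Hrec. exists (ka + (kb + (kc' + kd))). exists qf; split => //.
  apply: comp_cat Ca _. apply: comp_cat (comp_trans P Cb) _. exact: comp_cat (comp_trans P Cc') Cd.
case: Hw1 => m1 Em1. case: Hw2 => m2 Em2.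
have := cnt_W0 m1; have := cnt_W1 m1; have := cnt_W2 m1; rewrite -Em1.
have := cnt_W0 m2; have := cnt_W1 m2; have := cnt_W2 m2; rewrite -Em2.
rewrite !count_cat. lia.
Qed.

End Main.

Lemma not_F2 : ~ in_wlin_class F2_group L3.
Proof.
case=> A [t [_ [Hrec _]]].
have Hg := good_ex Hrec.
have [f Hf] : {f : nat -> sgT A | forall n, f n \in S3 A /\ good n (f n)}.
  exists (fun n => proj1_sig (constructive_indefinite_description _ (Hg n))).
  move=> n. exact: proj2_sig (constructive_indefinite_description _ (Hg n)).
set s := map f (iota 0 (size (S3 A)).+1).
have : ~~ uniq s.
  apply/negP => Hu.
  have Hsub : {subset s <= S3 A} by move=> x /mapP [n _ ->]; exact: (Hf n).1.
  have := uniq_leq_size Hu Hsub.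
  by rewrite size_map size_iota ltnn.
case/(uniqPn (f 0)) => i [j [Hij Hj]].
rewrite /s size_map size_iota in Hj. rewrite !(nth_map 0) ?size_iota ?nth_iota //; try exact: ltn_trans Hij Hj.
rewrite !add0n => E.
have Eij : i = j by apply: (swap Hrec (Hf i).2); rewrite E; exact: (Hf j).2.
by rewrite Eij ltnn in Hij.
Qed.

Definition G2 := prod_group F2_group F2_group.
Definition aa : letter := (false,false).
Definition ai : letter := (false,true).

Lemma red_nseq n l : reduced (nseq n l).
Proof.
elim: n => // [[|n]] // IH. rewrite /reduced /= in IH *. rewrite IH andbT /adj.
by case: l {IH} => a b; apply/negP => /eqP [] /eqP; case: b.
Qed.

Definition apow n : F2 := exist (fun w => reduced w) (nseq n aa) (red_nseq n aa).
Definition fa : F2 := apow 1.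
Definition fai : F2 := exist (fun w => reduced w) [:: ai] isT.
Definition msym (s : 'I_3) : gcar G2 :=
  if s == o0 then (fa, F2one) else if s == o1 then (fai, fa) else (F2one, fai).
Definition dB (q : 'I_3) (o : option 'I_3) : seq ('I_3 * gcar G2) :=
  if o is Some s then (if q <= s then [:: (s, msym s)] else [::]) else [::].
Definition B : Gautomaton G2 'I_3 := @GAut G2 'I_3 'I_3 dB o0 predT.

Notation pc w := (count (pred1 aa) w).
Notation nc w := (count (pred1 ai) w).

Lemma ccons_cnt l v : pc (ccons l v) + nc v + nc [:: l] = nc (ccons l v) + pc v + pc [:: l].
Proof.
case: v => [|y v]; first by case: l => [[] []].
rewrite /=; case: eqP => [->|_].
- case: l => [[] []] /=; lia.
- rewrite /=; lia.
Qed.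

Lemma mul_cnt x m : pc (foldr ccons m x) + nc x + nc m = nc (foldr ccons m x) + pc x + pc m.
Proof.
elim: x => [|l x IH]; first by rewrite /=; lia.
change (foldr ccons m (l :: x)) with (ccons l (foldr ccons m x)).
rewrite -cat1s !count_cat. have := ccons_cnt l (foldr ccons m x). lia.
Qed.

Lemma dB_mem q s q1 m : (q1, m) \in dB q (Some s) -> [/\ q <= s, q1 = s & m = msym s].
Proof.
rewrite /dB; case: ifP => // H; rewrite mem_seq1 => /eqP [-> ->]. by split.
Qed.

Lemma B_shape q x w k q' y : comp B q x w k q' y ->
  exists i j l, w = nseq i o0 ++ nseq j o1 ++ nseq l o2 /\ (0 < q -> i = 0) /\ (1 < q -> j = 0).
Proof.
elim => {q x w k q' y} [q x|q x s w k q1 m q3 x3 Hm _ IH|q x w k q1 m q3 x3 Hm _ IH].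
- by exists 0, 0, 0.
- have [Hq Eq Em] := dB_mem Hm. subst q1 m.
  have [i [j [l [Ew [H1 H2]]]]] := IH. rewrite Ew. clear IH Hm.
  case: s Hq H1 H2 Ew => [[|[|[|]]] Hs] //= Hq H1 H2 Ew.
  + rewrite (_ : Ordinal Hs = o0); last exact: val_inj.
    exists i.+1, j, l; split => //. split => H; lia.
  + rewrite (_ : Ordinal Hs = o1); last exact: val_inj.
    rewrite (H1 isT). exists 0, j.+1, l; split => //. split => H; lia.
  + rewrite (_ : Ordinal Hs = o2); last exact: val_inj.
    rewrite (H1 isT) (H2 isT). exists 0, 0, l.+1; by split.
- by [].
Qed.

Definition pcF (x : F2) : nat := pc (sval x).
Definition ncF (x : F2) : nat := nc (sval x).
Arguments pcF : simpl never.
Arguments ncF : simpl never.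

Lemma pcFa : pcF fa = 1. Proof. by []. Qed.
Lemma ncFa : ncF fa = 0. Proof. by []. Qed.
Lemma pcFai : pcF fai = 0. Proof. by []. Qed.
Lemma ncFai : ncF fai = 1. Proof. by []. Qed.
Lemma pcF1 : pcF F2one = 0. Proof. by []. Qed.
Lemma ncF1 : ncF F2one = 0. Proof. by []. Qed.

Lemma mulF (x m : F2) : pcF (F2mul x m) + ncF x + ncF m = ncF (F2mul x m) + pcF x + pcF m.
Proof. exact: mul_cnt. Qed.

Lemma B_inv q x w k q' y : comp B q x w k q' y ->
  pcF y.1 + ncF x.1 + cnt o1 w = ncF y.1 + pcF x.1 + cnt o0 w /\
  pcF y.2 + ncF x.2 + cnt o2 w = ncF y.2 + pcF x.2 + cnt o1 w.
Proof.
elim => {q x w k q' y} [q x|q x s w k q1 m q3 x3 Hm _ IH|q x w k q1 m q3 x3 Hm _ IH].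
- split; rewrite /=; lia.
- have [Hq Eq Em] := dB_mem Hm. subst q1 m.
  move: IH => /= [IH1 IH2].
  have M1 := mulF x.1 (msym s).1.
  have M2 := mulF x.2 (msym s).2.
  clear Hm. case: s Hq IH1 IH2 M1 M2 => [[|[|[|]]] Hs] //= Hq IH1 IH2 M1 M2; split;
    rewrite /msym /= in M1 M2; rewrite ?pcFa ?ncFa ?pcFai ?ncFai ?pcF1 ?ncF1 in M1 M2; lia.
- by [].
Qed.

Lemma run (s q : 'I_3) (x : gcar G2) n : q <= s -> exists q' : 'I_3, q' <= s /\
  comp B q x (nseq n s) n q' (iter n (fun y => @gmul G2 y (msym s)) x).
Proof.
elim: n q x => [|n IH] q x Hq; first by exists q; split => //; exact: comp_nil.
have [q' [Hq' C]] := IH s (@gmul G2 x (msym s)) (leqnn _).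
exists q'; split => //. rewrite iterSr.
apply: comp_read C. by rewrite /= /dB Hq mem_seq1.
Qed.

Lemma iter_B n s (x1 x2 : F2) : iter n (fun y => @gmul G2 y (msym s)) (x1, x2) =
  (iter n (fun z => F2mul z (msym s).1) x1, iter n (fun z => F2mul z (msym s).2) x2).
Proof. by elim: n => //= n ->. Qed.

Lemma ccons_aa i : ccons aa (nseq i aa) = nseq i.+1 aa.
Proof. by case: i. Qed.

Lemma foldr_aa j : foldr ccons [:: aa] (nseq j aa) = nseq j.+1 aa.
Proof. elim: j => //= j ->. exact: (ccons_aa j.+1). Qed.

Lemma foldr_ai j : foldr ccons [:: ai] (nseq j.+1 aa) = nseq j aa.
Proof. elim: j => // j IH. change (ccons aa (foldr ccons [:: ai] (nseq j.+1 aa)) = nseq j.+1 aa). rewrite IH. exact: ccons_aa. Qed.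

Lemma iter_fa n i : iter n (fun z => F2mul z fa) (apow i) = apow (i + n).
Proof.
elim: n => [|n IH] /=; first by rewrite addn0.
rewrite IH addnS. apply: F2eq => /=. exact: foldr_aa.
Qed.

Lemma iter_fai n i : iter n (fun z => F2mul z fai) (apow (i + n)) = apow i.
Proof.
elim: n i => [|n IH] i; first by rewrite addn0.
rewrite iterSr -[RHS](IH i). congr iter. apply: F2eq => /=. rewrite addnS. exact: foldr_ai.
Qed.

Lemma iter_one n (x : F2) : iter n (fun z => F2mul z F2one) x = x.
Proof. elim: n => //= n ->. exact: F2oner. Qed.

Lemma apow0 : apow 0 = F2one. Proof. exact: F2eq. Qed.

Lemma iter_fa0 n : iter n (fun z => F2mul z fa) F2one = apow n.
Proof. by rewrite -apow0 iter_fa. Qed.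

Lemma iter_fai0 n : iter n (fun z => F2mul z fai) (apow n) = F2one.
Proof. by have := iter_fai n 0; rewrite add0n apow0. Qed.

Lemma B_acc n : exists q, comp B o0 (F2one, F2one) (Wd n) (n + (n + n)) q (F2one, F2one).
Proof.
have e1 : iter n (fun y => @gmul G2 y (msym o0)) (F2one, F2one) = (apow n, F2one).
  by rewrite iter_B /= iter_one iter_fa0.
have e2 : iter n (fun y => @gmul G2 y (msym o1)) (apow n, F2one) = (F2one, apow n).
  by rewrite iter_B /= iter_fai0 iter_fa0.
have e3 : iter n (fun y => @gmul G2 y (msym o2)) (F2one, apow n) = (F2one, F2one).
  by rewrite iter_B /= iter_one iter_fai0.
have [q1 [Hq1 R1]] := @run o0 o0 (F2one, F2one) n (leqnn _).
rewrite e1 in R1.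
have [q2 [Hq2 R2]] := @run o1 q1 (apow n, F2one) n (leq_trans Hq1 (isT : o0 <= o1)).
rewrite e2 in R2.
have [q3 [Hq3 R3]] := @run o2 q2 (F2one, apow n) n (leq_trans Hq2 (isT : o1 <= o2)).
rewrite e3 in R3.
exists q3. rewrite /Wd. apply: comp_cat R1 _. exact: comp_cat R2 R3.
Qed.

Lemma B_ok : in_wlin_class G2 L3.
Proof.
exists B, (fun n => n); split; first by exists 1, 0 => n _; rewrite mul1n.
split.
- move=> w; split.
  + move=> [n ->]. have [q Hq] := B_acc n. by exists (n + (n + n)), q.
  + move=> [k [q [_ Hc]]].
    have [i [j [l [Ew _]]]] := B_shape Hc.
    have [I1 I2] := B_inv Hc.
    move: I1 I2; rewrite /= !pcF1 !ncF1 Ew !count_cat !count_nseq /= => I1 I2.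
    exists i; rewrite /Wd. have Eij : j = i by lia. have Ejl : l = i by lia. by rewrite Eij Ejl.
- move=> w [n ->]. exists (n + (n + n)); split; first by rewrite /Wd !size_cat !size_nseq.
  have [q Hq] := B_acc n. by exists q.
Qed.

Section Embed.
Variables (Sigma : finType) (A : Gautomaton F2_group Sigma).

Definition emb_t (t : state A * F2) : state A * gcar G2 := (t.1, (t.2, F2one)).
Definition Bemb : Gautomaton G2 Sigma :=
  @GAut G2 Sigma (state A) (fun q o => map emb_t (delta A q o)) (q0 A) (accepting A).

Lemma emb_fwd q x w k q' y : comp A q x w k q' y -> comp Bemb q (x, F2one) w k q' (y, F2one).
Proof.
elim => {q x w k q' y} [q x|q x s w k q1 m q3 x3 Hm _ IH|q x w k q1 m q3 x3 Hm _ IH].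
- exact: comp_nil.
- apply: (@comp_read _ _ Bemb _ _ _ _ _ q1 (m, F2one)); first exact: (map_f emb_t Hm).
  by rewrite /= F2onel.
- apply: (@comp_eps _ _ Bemb _ _ _ _ q1 (m, F2one)); first exact: (map_f emb_t Hm).
  by rewrite /= F2onel.
Qed.

Lemma emb_bwd q x w k q' y : comp Bemb q x w k q' y -> comp A q x.1 w k q' y.1 /\ y.2 = x.2.
Proof.
elim => {q x w k q' y} [q x|q x s w k q1 m q3 x3 Hm _ [IH1 IH2]|q x w k q1 m q3 x3 Hm _ [IH1 IH2]].
- split => //; exact: comp_nil.
- move: Hm => /mapP [[q2 m2] Hm [E1 E2]]; subst q1 m.
  move: IH1 IH2; rewrite /= F2oner => IH1 IH2. split => //. exact: comp_read Hm IH1.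
- move: Hm => /mapP [[q2 m2] Hm [E1 E2]]; subst q1 m.
  move: IH1 IH2; rewrite /= F2oner => IH1 IH2. split => //. exact: comp_eps Hm IH1.
Qed.

Lemma emb_acc w k : accepts_in Bemb w k <-> accepts_in A w k.
Proof.
split.
- move=> [q [Hq Hc]]. exists q; split => //. exact: (emb_bwd Hc).1.
- move=> [q [Hq Hc]]. exists q; split => //. exact: emb_fwd Hc.
Qed.
End Embed.

Theorem theorem4p15 :
  (forall (Sigma : finType) (L : language Sigma),
      in_wlin_class F2_group L -> in_wlin_class (prod_group F2_group F2_group) L)
  /\
  (exists (Sigma : finType) (L : language Sigma),
      in_wlin_class (prod_group F2_group F2_group) L /\ ~ in_wlin_class F2_group L).
Proof.
split.
- move=> Sigma L [A [t [Ht [Hrec Htb]]]].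
  exists (Bemb A), t; split => //; split.
  + move=> w; rewrite Hrec; split => [[k Hk]|[k Hk]]; exists k; exact/emb_acc.
  + move=> w Hw. have [k [Hk Ha]] := Htb w Hw. exists k; split => //. exact/emb_acc.
- exists [the finType of 'I_3]. exists L3. split; [exact: B_ok | exact: not_F2].
Qed.
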